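(* Let $P=\{(x,y,z)\in\mathbb{R}^3: z=\tfrac12xy\}$. Then $(P,d_{\mathbb{H}})$ bi-Lipschitz embeds in $\mathbb{R}^{19}$.
   Context: For $p=(x,y,z)$, $q=(x',y',z')$, $d_{\mathbb{H}}(p,q)=|x-x'|+|y-y'|+|z-z'+\tfrac12(xy'-x'y)|^{1/2}$. $(A,d_{\mathbb{H}})$ bi-Lipschitz embeds in $\mathbb{R}^{N}$ if there are $L\ge1$ and $f:A\to\mathbb{R}^N$ with $L^{-1}d_{\mathbb{H}}(a,b)\le|f(a)-f(b)|\le Ld_{\mathbb{H}}(a,b)$ for all $a,b\in A$. *)

(* Defs.v *)
From Stdlib Require Import Reals.
Open Scope R_scope.

(* Points of the Heisenberg group in exponential coordinates (x,y,z). *)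
Definition H3 := (R * R * R)%type.

Definition dH (p q : H3) : R :=
  let '(x, y, z) := p in
  let '(x', y', z') := q in
  Rabs (x - x') + Rabs (y - y') + sqrt (Rabs (z - z' + / 2 * (x * y' - x' * y))).

(* Euclidean space R^N: vectors are functions nat -> R, only the
   coordinates 0..N-1 matter. *)
Fixpoint sqsum (N : nat) (u : nat -> R) : R :=
  match N with
  | O => 0
  | S n => sqsum n u + u n ^ 2
  end.

Definition euclid_dist (N : nat) (u v : nat -> R) : R :=
  sqrt (sqsum N (fun i => u i - v i)).

Definition biLipschitz_embeds (A : H3 -> Prop) (N : nat) : Prop :=
  exists (L : R) (f : H3 -> (nat -> R)),
    1 <= L /\
    forall a b : H3, A a -> A b ->
      / L * dH a b <= euclid_dist N (f a) (f b) /\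
      euclid_dist N (f a) (f b) <= L * dH a b.

Definition planeP (p : H3) : Prop :=
  let '(x, y, z) := p in z = / 2 * (x * y).

(* Main.v *)
Require Import Defs.
From Stdlib Require Import Reals.
From Stdlib Require Import Lra Lia Psatz ZArith.
From Coquelicot Require Import Coquelicot.
Open Scope R_scope.


Lemma ln2_pos : 0 < ln 2.
Proof. rewrite <- ln_1. apply ln_increasing; lra. Qed.

Definition P (t : R) : R := exp (t * ln 2).

Lemma P_pos t : 0 < P t.
Proof. apply exp_pos. Qed.

Lemma P_add a b : P (a + b) = P a * P b.
Proof. unfold P. rewrite <- exp_plus. f_equal. ring. Qed.

Lemma P_0 : P 0 = 1.
Proof. unfold P. rewrite Rmult_0_l. apply exp_0. Qed.

Lemma P_1 : P 1 = 2.
Proof. unfold P. rewrite Rmult_1_l. apply exp_ln. lra. Qed.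

Lemma P_le a b : a <= b -> P a <= P b.
Proof.
  intros H. unfold P. destruct (Rle_lt_or_eq_dec _ _ H) as [H1|H1].
  - left. apply exp_increasing. pose proof ln2_pos. nra.
  - subst. lra.
Qed.

Lemma P_lt a b : a < b -> P a < P b.
Proof. intros H. unfold P. apply exp_increasing. pose proof ln2_pos. nra. Qed.

Lemma P_opp a : P (- a) * P a = 1.
Proof. rewrite <- P_add. replace (-a + a) with 0 by ring. apply P_0. Qed.

Lemma P_sq a : P (2 * a) = P a * P a.
Proof. rewrite <- P_add. f_equal. ring. Qed.

Lemma pow_S_r_aux (x:R) n : x ^ S n = x ^ n * x.
Proof. simpl. ring. Qed.

Lemma P_nat n : P (- INR n) = (1/2) ^ n.
Proof.
  induction n.
  - simpl. replace (-0) with 0 by ring. apply P_0.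
  - rewrite S_INR. replace (- (INR n + 1)) with (- INR n + -1) by ring.
    rewrite P_add, IHn. rewrite pow_S_r_aux. pose proof (P_opp 1) as H. rewrite P_1 in H.
    assert (P (- (1)) = 1/2) by lra. replace (-1) with (- (1)) by ring. rewrite H0. ring.
Qed.

Lemma P_scale (s c : R) : 0 < s -> 0 < c -> exists n : Z, 1 <= P (IZR n * c) * s < P c.
Proof.
  intros Hs Hc.
  set (t := ln s / (c * ln 2)).
  destruct (base_Int_part t) as [H1 H2].
  exists (- Int_part t)%Z.
  pose proof ln2_pos as Hl.
  assert (Hs' : s = exp (ln s)) by (rewrite exp_ln; auto).
  unfold P. rewrite Hs', <- exp_plus. rewrite opp_IZR.
  assert (Ht : ln s = t * (c * ln 2)) by (unfold t; field; split; lra).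
  rewrite Ht. set (z := IZR (Int_part t)) in *.
  split.
  - rewrite <- exp_0. destruct (Rle_lt_or_eq_dec 0 (- z * c * ln 2 + t * (c * ln 2))).
    + assert (0 <= (t - z) * (c * ln 2)) by (apply Rmult_le_pos; nra). nra.
    + left. apply exp_increasing. auto.
    + rewrite e. lra.
  - apply exp_increasing. assert ((t - z) * (c*ln 2) < 1 * (c * ln 2)).
    { apply Rmult_lt_compat_r; nra. } nra.
Qed.

Lemma Rabs_sin_le x : Rabs (sin x) <= Rabs x.
Proof.
  assert (H : forall x, 0 <= x -> Rabs (sin x) <= x).
  { intros y Hy. destruct (Rle_lt_or_eq_dec _ _ Hy) as [Hy'|Hy'].
    - destruct (Rle_lt_dec 1 y).
      + pose proof (SIN_bound y). unfold Rabs; destruct Rcase_abs; lra.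
      + pose proof (sin_lt_x y Hy'). assert (0 <= sin y).
        { apply sin_ge_0; pose proof PI2_3_2; lra. }
        rewrite Rabs_right; lra.
    - subst. rewrite sin_0, Rabs_R0. lra. }
  destruct (Rle_lt_dec 0 x).
  - rewrite (Rabs_right x) by lra. apply H; lra.
  - rewrite (Rabs_left x) by lra. replace (sin x) with (sin (- (-x))) by (f_equal; ring). rewrite sin_neg, Rabs_Ropp.
    apply H; lra.
Qed.

Lemma cos_lip a b : Rabs (cos a - cos b) <= Rabs (a - b).
Proof.
  rewrite form2. rewrite !Rabs_mult.
  pose proof (Rabs_sin_le ((a - b) / 2)). pose proof (SIN_bound ((a+b)/2)).
  assert (Rabs (sin ((a + b) / 2)) <= 1) by (unfold Rabs; destruct Rcase_abs; lra).
  assert (Rabs ((a - b) / 2) = Rabs (a - b) / 2).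
  { unfold Rdiv. rewrite Rabs_mult. rewrite (Rabs_right (/2)) by lra. ring. }
  rewrite Rabs_left by lra.
  pose proof (Rabs_pos (sin ((a - b) / 2))). pose proof (Rabs_pos (sin ((a + b) / 2))).
  nra.
Qed.

Lemma sin_lip a b : Rabs (sin a - sin b) <= Rabs (a - b).
Proof.
  rewrite form4. rewrite !Rabs_mult.
  pose proof (Rabs_sin_le ((a - b) / 2)). pose proof (COS_bound ((a+b)/2)).
  assert (Rabs (cos ((a + b) / 2)) <= 1) by (unfold Rabs; destruct Rcase_abs; lra).
  assert (Rabs ((a - b) / 2) = Rabs (a - b) / 2).
  { unfold Rdiv. rewrite Rabs_mult. rewrite (Rabs_right (/2)) by lra. ring. }
  rewrite Rabs_right by lra.
  pose proof (Rabs_pos (sin ((a - b) / 2))). pose proof (Rabs_pos (cos ((a + b) / 2))).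
  nra.
Qed.

Lemma cos_le_35 t : 1 <= Rabs t <= 4 -> cos t <= 3/5.
Proof.
  intros Ht.
  assert (H : forall u, 1 <= u <= 4 -> cos u <= 3/5).
  { intros u Hu. pose proof PI2_3_2. pose proof PI_4.
    destruct (Rle_lt_dec (PI/2) u).
    - pose proof (cos_le_0 u). lra.
    - assert (cos u <= cos 1) by (apply cos_decr_1; lra).
      pose proof (SIN (1/2)). assert (sin_lb (1/2) <= sin (1/2)) by (apply SIN; lra).
      unfold sin_lb, sin_approx in H3. simpl in H3. unfold sin_term in H3. simpl in H3.
      assert (cos 1 = 1 - 2 * sin (1/2) * sin (1/2)).
      { replace 1 with (2 * (1/2)) at 1 by field. rewrite cos_2a_sin. ring. }
      nra. }
  destruct (Rle_lt_dec 0 t).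
  - rewrite Rabs_right in Ht by lra. apply H; lra.
  - rewrite Rabs_left in Ht by lra. rewrite <- cos_neg. apply H; lra.
Qed.

Fixpoint nsum (n : nat) (w : nat -> R) : R :=
  match n with O => 0 | S n => nsum n w + w n end.

Lemma nsum_ext n u v : (forall i, (i < n)%nat -> u i = v i) -> nsum n u = nsum n v.
Proof. induction n; simpl; intros H; auto. rewrite IHn by (intros; apply H; lia). rewrite H by lia. auto. Qed.

Lemma nsum_le n u v : (forall i, (i < n)%nat -> u i <= v i) -> nsum n u <= nsum n v.
Proof. induction n; simpl; intros H; [lra|]. pose proof (IHn (fun i Hi => H i ltac:(lia))). pose proof (H n ltac:(lia)). lra. Qed.

Lemma nsum_minus n u v : nsum n (fun i => u i - v i) = nsum n u - nsum n v.
Proof. induction n; simpl; [ring|]. rewrite IHn. ring. Qed.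

Lemma nsum_plus n u v : nsum n (fun i => u i + v i) = nsum n u + nsum n v.
Proof. induction n; simpl; [ring|]. rewrite IHn. ring. Qed.

Lemma nsum_abs n u : Rabs (nsum n u) <= nsum n (fun i => Rabs (u i)).
Proof. induction n; simpl. rewrite Rabs_R0; lra. pose proof (Rabs_triang (nsum n u) (u n)). lra. Qed.

Lemma nsum_const_bound n u T : (forall i, (i < n)%nat -> u i <= T) -> nsum n u <= INR n * T.
Proof. induction n; intros H; [simpl; lra|]. pose proof (IHn (fun i Hi => H i ltac:(lia))). pose proof (H n ltac:(lia)).
  rewrite S_INR. simpl nsum. lra. Qed.

Lemma nsum_nonneg n u : (forall i, (i < n)%nat -> 0 <= u i) -> 0 <= nsum n u.
Proof. induction n; intros H; simpl; [lra|]. pose proof (IHn (fun i Hi => H i ltac:(lia))). pose proof (H n ltac:(lia)). lra. Qed.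

Lemma nsum_split n u i0 : (i0 < n)%nat -> nsum n u = u i0 + nsum n (fun i => if Nat.eqb i i0 then 0 else u i).
Proof.
  induction n; intros H; [lia|]. simpl.
  destruct (Nat.eq_dec i0 n).
  - subst. rewrite Nat.eqb_refl.
    rewrite (nsum_ext n (fun i => if Nat.eqb i n then 0 else u i) u). ring.
    intros i Hi. destruct (Nat.eqb_spec i n); [lia|auto].
  - rewrite IHn by lia. destruct (Nat.eqb_spec n i0); [lia|]. ring.
Qed.

Lemma nsum_shift n g : nsum (S n) g = g O + nsum n (fun i => g (S i)).
Proof. induction n. simpl. ring. change (nsum (S (S n)) g) with (nsum (S n) g + g (S n)). rewrite IHn. simpl. ring. Qed.

Lemma half_pow_pos n : 0 < (1/2) ^ n.
Proof. apply pow_lt. lra. Qed.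

Lemma half_pow_le1 n : (1/2) ^ n <= 1.
Proof. induction n; simpl; [lra|]. pose proof (half_pow_pos n). lra. Qed.

Lemma pow_S_r_aux2 (x:R) n : x ^ S n = x * x ^ n.
Proof. reflexivity. Qed.

Lemma GL (w : nat -> R) n (m : Z) B B0 : 0 <= B -> 0 <= B0 ->
  (forall i, (i < n)%nat -> Z.of_nat i <> m -> w i <= B * (1/2) ^ (Z.abs_nat (Z.of_nat i - m))) ->
  (forall i, (i < n)%nat -> Z.of_nat i = m -> w i <= B0) ->
  nsum n w <= B0 + 2 * B.
Proof.
  intros HB HB0 H1 H2.
  set (b := fun n' : nat => if Z.leb (Z.of_nat n') m then 2 * B * (1/2) ^ (Z.to_nat (m - Z.of_nat n' + 1))
                       else B + B0 + B * (1 - (1/2) ^ (Z.to_nat (Z.of_nat n' - m - 1)))).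
  assert (Hinv : forall n', (n' <= n)%nat -> nsum n' w <= b n').
  { induction n' as [|n' IH]; intros Hn'.
    - simpl. unfold b. destruct (Z.leb_spec (Z.of_nat 0) m).
      + pose proof (half_pow_pos (Z.to_nat (m - Z.of_nat 0 + 1))). nra.
      + assert ((1/2) ^ (Z.to_nat (Z.of_nat 0 - m - 1)) <= 1) by apply half_pow_le1.
        nra.
    - simpl. specialize (IH ltac:(lia)). unfold b in *.
      destruct (Z.leb_spec (Z.of_nat n') m) as [Hle|Hlt].
      + destruct (Z.eq_dec (Z.of_nat n') m) as [Heq|Hne].
        * specialize (H2 n' ltac:(lia) Heq).
          destruct (Z.leb_spec (Z.of_nat (S n')) m); [lia|].
          replace (Z.to_nat (m - Z.of_nat n' + 1)) with 1%nat in IH by lia.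
          replace (Z.to_nat (Z.of_nat (S n') - m - 1)) with 0%nat by lia.
          simpl in *. lra.
        * specialize (H1 n' ltac:(lia) Hne).
          destruct (Z.leb_spec (Z.of_nat (S n')) m); [|lia].
          replace (Z.abs_nat (Z.of_nat n' - m)) with (Z.to_nat (m - Z.of_nat (S n') + 1)) in H1 by lia.
          replace (Z.to_nat (m - Z.of_nat n' + 1)) with (S (Z.to_nat (m - Z.of_nat (S n') + 1))) in IH by lia.
          rewrite pow_S_r_aux2 in IH. nra.
      + destruct (Z.leb_spec (Z.of_nat (S n')) m); [lia|].
        specialize (H1 n' ltac:(lia) ltac:(lia)).
        replace (Z.abs_nat (Z.of_nat n' - m)) with (S (Z.to_nat (Z.of_nat n' - m - 1))) in H1 by lia.
        replace (Z.to_nat (Z.of_nat (S n') - m - 1)) with (S (Z.to_nat (Z.of_nat n' - m - 1))) by lia.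
        simpl in *. lra. }
  specialize (Hinv n (le_n n)). unfold b in Hinv.
  destruct (Z.leb_spec (Z.of_nat n) m).
  - assert ((1/2) ^ (Z.to_nat (m - Z.of_nat n + 1)) <= 1) by apply half_pow_le1. nra.
  - pose proof (half_pow_pos (Z.to_nat (Z.of_nat n - m - 1))). nra.
Qed.

Definition zsum (N : nat) (u : Z -> R) : R :=
  nsum (2 * N) (fun i => u (Z.of_nat i - Z.of_nat N)%Z).

Lemma zsum_S N u : zsum (S N) u = zsum N u + u (- Z.of_nat (S N))%Z + u (Z.of_nat N).
Proof.
  unfold zsum. replace (2 * S N)%nat with (S (S (2 * N))) by lia.
  rewrite nsum_shift.
  change (nsum (S (2 * N)) (fun i => u (Z.of_nat (S i) - Z.of_nat (S N))%Z)) with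
    (nsum (2 * N) (fun i => u (Z.of_nat (S i) - Z.of_nat (S N))%Z) + u (Z.of_nat (S (2 * N)) - Z.of_nat (S N))%Z).
  replace (Z.of_nat 0 - Z.of_nat (S N))%Z with (- Z.of_nat (S N))%Z by lia.
  rewrite (nsum_ext _ (fun i => u (Z.of_nat (S i) - Z.of_nat (S N))%Z) (fun i => u (Z.of_nat i - Z.of_nat N)%Z)).
  2:{ intros. f_equal. lia. }
  replace (Z.of_nat (S (2 * N)) - Z.of_nat (S N))%Z with (Z.of_nat N) by lia. ring.
Qed.

Lemma P_2 : P 2 = 4.
Proof. replace 2 with (1 + 1) by ring. rewrite P_add, P_1. ring. Qed.
Lemma P_8 : P 8 = 256.
Proof. replace 8 with (2 * (2 * 2)) by ring. rewrite !P_sq, P_2. ring. Qed.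
Lemma P_16 : P 16 = 65536.
Proof. replace 16 with (2 * 8) by ring. rewrite P_sq, P_8. ring. Qed.

Lemma sq_le a b : 0 <= b -> a * a <= b * b -> a <= b.
Proof. intros. nra. Qed.

Lemma P_le1 a : a <= 0 -> P a <= 1.
Proof. intros. rewrite <- P_0. apply P_le. auto. Qed.

Lemma Pd_bound (d : Z) : (0 <= d)%Z -> P (- (8 * IZR d)) <= (1/2) ^ (Z.abs_nat d).
Proof.
  intros Hd. rewrite <- P_nat. apply P_le.
  assert (IZR d = INR (Z.abs_nat d)).
  { rewrite INR_IZR_INZ. f_equal. lia. }
  rewrite <- H. apply IZR_le in Hd. lra.
Qed.

Lemma Pd_bound1 (d : Z) : (1 <= d)%Z -> P (- (8 * IZR d)) <= /128 * (1/2) ^ (Z.abs_nat d).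
Proof.
  intros Hd. rewrite <- P_nat.
  assert (IZR d = INR (Z.abs_nat d)).
  { rewrite INR_IZR_INZ. f_equal. lia. }
  rewrite <- H.
  replace (- (8 * IZR d)) with (- 7 + (- IZR d + - (7 * (IZR d - 1)))) by ring.
  rewrite !P_add.
  assert (P (-7) = /128).
  { replace (-7) with (- INR 7) by (simpl; ring). rewrite P_nat. simpl. field. }
  rewrite H0.
  assert (P (- (7 * (IZR d - 1))) <= 1).
  { apply P_le1. apply IZR_le in Hd. lra. }
  pose proof (P_pos (- IZR d)). pose proof (P_pos (- (7 * (IZR d - 1)))). nra.
Qed.

Definition kk (r : nat) (j : Z) : R := 8 * IZR j + INR r.

Lemma kk_diff r j j' : kk r j = kk r j' + 8 * IZR (j - j').
Proof. unfold kk. rewrite minus_IZR. ring. Qed.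

Definition amp (k y : R) : R := Rmax 0 (sqrt (Rabs y) * P (- k) - P (- (2 * k))).

Definition term (phi : R -> R) (r : nat) (x y : R) (j : Z) : R :=
  amp (kk r j) y * phi (P (2 * kk r j) * x).

Lemma amp_nonneg k y : 0 <= amp k y.
Proof. unfold amp. apply Rmax_l. Qed.

Lemma amp_le k y : amp k y <= sqrt (Rabs y) * P (- k).
Proof.
  unfold amp. apply Rmax_lub. apply Rmult_le_pos. apply sqrt_pos. left; apply P_pos.
  pose proof (P_pos (- (2 * k))). lra.
Qed.

Lemma amp_ge k y : sqrt (Rabs y) * P (- k) - P (- (2 * k)) <= amp k y.
Proof. unfold amp. apply Rmax_r. Qed.

Lemma sqrt_abs_sq y : sqrt (Rabs y) * sqrt (Rabs y) = Rabs y.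
Proof. apply sqrt_sqrt. apply Rabs_pos. Qed.

Lemma amp_zero k y : P (2 * k) * Rabs y <= 1 -> amp k y = 0.
Proof.
  intros H. unfold amp. apply Rmax_left.
  rewrite P_sq in H. rewrite <- (sqrt_abs_sq y) in H.
  assert (Hs : P k * sqrt (Rabs y) <= 1).
  { pose proof (P_pos k). pose proof (sqrt_pos (Rabs y)). nra. }
  replace (- (2 * k)) with (2 * (- k)) by ring. rewrite P_sq.
  pose proof (P_opp k). pose proof (P_pos (-k)). nra.
Qed.

Lemma Rmax0_lip a b : Rabs (Rmax 0 a - Rmax 0 b) <= Rabs (a - b).
Proof. unfold Rmax. destruct (Rle_dec 0 a), (Rle_dec 0 b); unfold Rabs; repeat destruct Rcase_abs; lra. Qed.

Lemma amp_diff k y y' : Rabs y' <= Rabs y ->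
  Rabs (amp k y - amp k y') <= P (- k) * (sqrt (Rabs y) - sqrt (Rabs y')).
Proof.
  intros H. unfold amp. eapply Rle_trans. apply Rmax0_lip.
  replace (sqrt (Rabs y) * P (- k) - P (- (2 * k)) - (sqrt (Rabs y') * P (- k) - P (- (2 * k))))
    with (P (-k) * (sqrt (Rabs y) - sqrt (Rabs y'))) by ring.
  rewrite Rabs_mult. rewrite Rabs_right by (left; apply P_pos).
  rewrite Rabs_right. lra. apply Rle_ge. assert (sqrt (Rabs y') <= sqrt (Rabs y)) by (apply sqrt_le_1_alt; auto). lra.
Qed.

Lemma sqrt_diff_bound a b : 0 <= b <= a -> sqrt a * (sqrt a - sqrt b) <= a - b.
Proof.
  intros H. pose proof (sqrt_sqrt a ltac:(lra)). pose proof (sqrt_sqrt b ltac:(lra)).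
  pose proof (sqrt_pos a). pose proof (sqrt_pos b).
  assert (sqrt b <= sqrt a) by (apply sqrt_le_1_alt; lra). nra.
Qed.

Lemma damp_point r j js y y' : Rabs y' <= Rabs y ->
  1 <= P (2 * kk r js) * Rabs y -> P (2 * kk r js) * Rabs y < P 16 ->
  Rabs (amp (kk r j) y - amp (kk r j) y') <= Rabs (y - y') * (1/2) ^ (Z.abs_nat (j - js)).
Proof.
  intros Hy H1 H2.
  pose proof (half_pow_pos (Z.abs_nat (j - js))) as Hh.
  destruct (Z_lt_le_dec j js) as [Hj|Hj].
  - (* both zero *)
    assert (Hz : P (2 * kk r j) * Rabs y <= 1).
    { rewrite (kk_diff r j js). replace (2 * (kk r js + 8 * IZR (j - js))) with (2 * kk r js + -16 + 16 * (IZR (j - js) + 1)) by ring.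
      rewrite !P_add. assert (P (16 * (IZR (j - js) + 1)) <= 1).
      { apply P_le1. assert (IZR (j - js) <= -1) by (apply IZR_le; lia). lra. }
      pose proof (P_opp 16). pose proof (P_pos (- (16))). pose proof (P_pos (2 * kk r js)).
      pose proof (P_pos (16 * (IZR (j - js) + 1))). pose proof (Rabs_pos y).
      replace (-16) with (- (16)) by ring.
      assert (P (2 * kk r js) * Rabs y * P (- (16)) <= 1) by nra.
      replace (P (2 * kk r js) * P (- (16)) * P (16 * (IZR (j - js) + 1)) * Rabs y)
        with ((P (2 * kk r js) * Rabs y * P (- (16))) * P (16 * (IZR (j - js) + 1))) by ring.
      nra. }
    rewrite amp_zero by auto. rewrite amp_zero.
    rewrite Rminus_0_r, Rabs_R0. pose proof (Rabs_pos (y - y')). nra.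
    pose proof (P_pos (2 * kk r j)). pose proof (Rabs_pos y'). nra.
  - eapply Rle_trans. apply amp_diff; auto.
    rewrite (kk_diff r j js). replace (- (kk r js + 8 * IZR (j - js))) with (- kk r js + - (8 * IZR (j - js))) by ring.
    rewrite P_add. pose proof (Pd_bound (j - js) ltac:(lia)).
    assert (Hk : P (- kk r js) <= sqrt (Rabs y)).
    { rewrite P_sq in H1. rewrite <- (sqrt_abs_sq y) in H1.
      assert (1 <= P (kk r js) * sqrt (Rabs y)).
      { pose proof (P_pos (kk r js)). pose proof (sqrt_pos (Rabs y)).
        apply sq_le. apply Rmult_le_pos; lra. lra. }
      pose proof (P_opp (kk r js)). pose proof (P_pos (- kk r js)). nra. }
    assert (Hs : sqrt (Rabs y) * (sqrt (Rabs y) - sqrt (Rabs y')) <= Rabs (y - y')).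
    { eapply Rle_trans. apply sqrt_diff_bound. split; auto. apply Rabs_pos.
      pose proof (Rabs_triang_inv y y'). lra. }
    assert (0 <= sqrt (Rabs y) - sqrt (Rabs y')).
    { assert (sqrt (Rabs y') <= sqrt (Rabs y)) by (apply sqrt_le_1_alt; auto). lra. }
    pose proof (P_pos (- kk r js)). pose proof (P_pos (- (8 * IZR (j - js)))).
    assert (P (- kk r js) * (sqrt (Rabs y) - sqrt (Rabs y')) <= Rabs (y - y')).
    { eapply Rle_trans; [|apply Hs]. apply Rmult_le_compat_r; auto. }
    replace (P (- kk r js) * P (- (8 * IZR (j - js))) * (sqrt (Rabs y) - sqrt (Rabs y')))
      with (P (- kk r js) * (sqrt (Rabs y) - sqrt (Rabs y')) * P (- (8 * IZR (j - js)))) by ring.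
    apply Rmult_le_compat; auto. apply Rmult_le_pos; lra. lra.
Qed.

Section Phi.
Variable phi : R -> R.
Hypothesis Hlip : forall a b, Rabs (phi a - phi b) <= Rabs (a - b).
Hypothesis Hb : forall a, Rabs (phi a) <= 1.

Lemma dphi_le2 a b : Rabs (phi a - phi b) <= 2.
Proof. pose proof (Hb a). pose proof (Hb b). pose proof (Rabs_triang (phi a) (- phi b)). rewrite Rabs_Ropp in H1. unfold Rminus. lra. Qed.

Lemma term_b1 k x x' y :
  amp k y * Rabs (phi (P (2 * k) * x) - phi (P (2 * k) * x')) <= sqrt (Rabs y) * (P k * Rabs (x - x')).
Proof.
  pose proof (Hlip (P (2 * k) * x) (P (2 * k) * x')) as H.
  replace (P (2 * k) * x - P (2 * k) * x') with (P (2 * k) * (x - x')) in H by ring.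
  rewrite Rabs_mult, (Rabs_right (P (2*k))) in H by (left; apply P_pos).
  pose proof (amp_le k y). pose proof (amp_nonneg k y).
  assert (Heq : P (- k) * P (2 * k) = P k) by (rewrite <- P_add; f_equal; ring).
  pose proof (Rabs_pos (phi (P (2 * k) * x) - phi (P (2 * k) * x'))).
  pose proof (sqrt_pos (Rabs y)). pose proof (P_pos (-k)). pose proof (P_pos (2*k)). pose proof (Rabs_pos (x - x')).
  apply Rle_trans with (sqrt (Rabs y) * P (- k) * (P (2 * k) * Rabs (x - x'))).
  apply Rmult_le_compat; auto.
  rewrite <- Heq. right; ring.
Qed.

Lemma term_b2 k x x' y :
  amp k y * Rabs (phi (P (2 * k) * x) - phi (P (2 * k) * x')) <= 2 * (sqrt (Rabs y) * P (- k)).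
Proof.
  pose proof (dphi_le2 (P (2 * k) * x) (P (2 * k) * x')).
  pose proof (amp_le k y). pose proof (amp_nonneg k y).
  pose proof (Rabs_pos (phi (P (2 * k) * x) - phi (P (2 * k) * x'))). nra.
Qed.
End Phi.

Lemma Pk_sqrt_ge k h : 0 <= h -> 1 <= P (2 * k) * h -> P (- k) <= sqrt h.
Proof.
  intros H0 H1. rewrite P_sq in H1. rewrite <- (sqrt_sqrt h H0) in H1.
  assert (1 <= P k * sqrt h).
  { pose proof (P_pos k). pose proof (sqrt_pos h). apply sq_le. apply Rmult_le_pos; lra. lra. }
  pose proof (P_opp k). pose proof (P_pos (- k)). pose proof (sqrt_pos h). nra.
Qed.

Lemma Pk_h_le k h c : 0 <= h -> 0 <= c -> P (2 * k) * h <= c * c -> P k * h <= c * sqrt h.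
Proof.
  intros H0 Hc H1. rewrite P_sq in H1.
  pose proof (sqrt_sqrt h H0). pose proof (sqrt_pos h). pose proof (P_pos k).
  apply sq_le. nra.
  replace (P k * h * (P k * h)) with (P k * P k * h * h) by ring.
  replace (c * sqrt h * (c * sqrt h)) with (c * c * (sqrt h * sqrt h)) by ring. rewrite H.
  apply Rmult_le_compat_r; auto.
Qed.

Section Phi2.
Variable phi : R -> R.
Hypothesis Hlip : forall a b, Rabs (phi a - phi b) <= Rabs (a - b).
Hypothesis Hb : forall a, Rabs (phi a) <= 1.

Definition dterm r x x' y j :=
  amp (kk r j) y * Rabs (phi (P (2 * kk r j) * x) - phi (P (2 * kk r j) * x')).

Lemma dphi_point r j js x x' y : 1 <= P (2 * kk r js) * Rabs (x - x') ->
  P (2 * kk r js) * Rabs (x - x') <= 256 * 256 ->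
  dterm r x x' y j <= 256 * (sqrt (Rabs (x - x')) * sqrt (Rabs y)) * (1/2) ^ (Z.abs_nat (j - js)).
Proof.
  intros H1 H2. unfold dterm. set (h := Rabs (x - x')) in *.
  assert (Hh : 0 <= h) by apply Rabs_pos.
  pose proof (sqrt_pos h). pose proof (sqrt_pos (Rabs y)).
  pose proof (half_pow_pos (Z.abs_nat (j - js))).
  destruct (Z_le_gt_dec j js) as [Hj|Hj].
  - eapply Rle_trans. apply term_b1; auto. fold h.
    rewrite (kk_diff r j js). replace (kk r js + 8 * IZR (j - js)) with (kk r js + - (8 * IZR (js - j)))
      by (rewrite !minus_IZR; ring).
    rewrite P_add. pose proof (Pd_bound (js - j) ltac:(lia)) as Hd.
    replace (Z.abs_nat (js - j)) with (Z.abs_nat (j - js)) in Hd by lia.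
    pose proof (Pk_h_le (kk r js) h 256 Hh ltac:(lra) H2).
    pose proof (P_pos (- (8 * IZR (js - j)))). pose proof (P_pos (kk r js)).
    replace (sqrt (Rabs y) * (P (kk r js) * P (- (8 * IZR (js - j))) * h))
      with (sqrt (Rabs y) * ((P (kk r js) * h) * P (- (8 * IZR (js - j))))) by ring.
    replace (256 * (sqrt h * sqrt (Rabs y)) * (1 / 2) ^ Z.abs_nat (j - js))
      with (sqrt (Rabs y) * ((256 * sqrt h) * (1 / 2) ^ Z.abs_nat (j - js))) by ring.
    apply Rmult_le_compat_l; auto. apply Rmult_le_compat; auto.
    apply Rmult_le_pos; lra. lra.
  - eapply Rle_trans. apply term_b2; auto.
    rewrite (kk_diff r j js). replace (- (kk r js + 8 * IZR (j - js))) with (- kk r js + - (8 * IZR (j - js))) by ring.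
    rewrite P_add. pose proof (Pd_bound (j - js) ltac:(lia)).
    pose proof (Pk_sqrt_ge (kk r js) h Hh H1).
    pose proof (P_pos (- (8 * IZR (j - js)))). pose proof (P_pos (- kk r js)).
    assert (P (- kk r js) * P (- (8 * IZR (j - js))) <= sqrt h * (1 / 2) ^ Z.abs_nat (j - js)).
    { apply Rmult_le_compat; lra. }
    apply Rle_trans with (2 * (sqrt (Rabs y) * (sqrt h * (1 / 2) ^ Z.abs_nat (j - js)))).
    apply Rmult_le_compat_l. lra. apply Rmult_le_compat_l; auto.
    assert (0 <= sqrt h * sqrt (Rabs y) * (1 / 2) ^ Z.abs_nat (j - js)).
    { apply Rmult_le_pos; [apply Rmult_le_pos|]; lra. }
    lra.
Qed.

Lemma tail_point r j j0 x x' y : j <> j0 -> 1 <= P (2 * kk r j0) * Rabs (x - x') ->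
  P (2 * kk r j0) * Rabs (x - x') <= 4 ->
  dterm r x x' y j <= (sqrt (Rabs y) * P (- kk r j0) / 32) * (1/2) ^ (Z.abs_nat (j - j0)).
Proof.
  intros Hne H1 H2. unfold dterm. set (h := Rabs (x - x')) in *.
  assert (Hh : 0 <= h) by apply Rabs_pos.
  pose proof (sqrt_pos (Rabs y)).
  pose proof (half_pow_pos (Z.abs_nat (j - j0))).
  pose proof (P_pos (- kk r j0)).
  destruct (Z_le_gt_dec j j0) as [Hj|Hj].
  - eapply Rle_trans. apply term_b1; auto. fold h.
    rewrite (kk_diff r j j0). replace (kk r j0 + 8 * IZR (j - j0)) with (kk r j0 + - (8 * IZR (j0 - j)))
      by (rewrite !minus_IZR; ring).
    rewrite P_add. pose proof (Pd_bound1 (j0 - j) ltac:(lia)) as Hd.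
    replace (Z.abs_nat (j0 - j)) with (Z.abs_nat (j - j0)) in Hd by lia.
    assert (Hk : P (kk r j0) * h <= 4 * P (- kk r j0)).
    { assert (Hq : P (kk r j0) = P (2 * kk r j0) * P (- kk r j0)) by (rewrite <- P_add; f_equal; ring).
      rewrite Hq. nra. }
    pose proof (P_pos (- (8 * IZR (j0 - j)))). pose proof (P_pos (kk r j0)).
    replace (sqrt (Rabs y) * (P (kk r j0) * P (- (8 * IZR (j0 - j))) * h))
      with (sqrt (Rabs y) * ((P (kk r j0) * h) * P (- (8 * IZR (j0 - j))))) by ring.
    apply Rle_trans with (sqrt (Rabs y) * ((4 * P (- kk r j0)) * (/ 128 * (1 / 2) ^ Z.abs_nat (j - j0)))).
    apply Rmult_le_compat_l; auto. apply Rmult_le_compat; auto. apply Rmult_le_pos; lra. lra.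
    right. field.
  - eapply Rle_trans. apply term_b2; auto.
    rewrite (kk_diff r j j0). replace (- (kk r j0 + 8 * IZR (j - j0))) with (- kk r j0 + - (8 * IZR (j - j0))) by ring.
    rewrite P_add. pose proof (Pd_bound1 (j - j0) ltac:(lia)).
    pose proof (P_pos (- (8 * IZR (j - j0)))).
    apply Rle_trans with (2 * (sqrt (Rabs y) * (P (- kk r j0) * (/ 128 * (1 / 2) ^ Z.abs_nat (j - j0))))).
    apply Rmult_le_compat_l. lra. apply Rmult_le_compat_l; auto. apply Rmult_le_compat_l; lra.
    assert (0 <= sqrt (Rabs y) * P (- kk r j0) * (1 / 2) ^ Z.abs_nat (j - j0)).
    { apply Rmult_le_pos; [apply Rmult_le_pos|]; lra. }
    lra.
Qed.

Lemma sum_E1 N r x x' y :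
  zsum N (dterm r x x' y) <= 768 * (sqrt (Rabs (x - x')) * sqrt (Rabs y)).
Proof.
  destruct (Req_dec x x') as [Heq|Hne].
  - subst. unfold zsum. eapply Rle_trans.
    apply (nsum_le _ _ (fun _ => 0)). intros. unfold dterm. rewrite Rminus_diag, Rabs_R0. right; ring.
    assert (nsum (2 * N) (fun _ => 0) = 0). { induction (2 * N)%nat; simpl; [ring|]. rewrite IHn. ring. }
    rewrite H. apply Rmult_le_pos. lra. apply Rmult_le_pos; apply sqrt_pos.
  - assert (Hh : 0 < Rabs (x - x')) by (apply Rabs_pos_lt; lra).
    destruct (P_scale (P (2 * INR r) * Rabs (x - x')) 16) as [js [Hs1 Hs2]].
    { pose proof (P_pos (2 * INR r)). nra. } lra.
    assert (Hk : P (2 * kk r js) = P (IZR js * 16) * P (2 * INR r)) by (rewrite <- P_add; f_equal; unfold kk; ring).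
    rewrite <- Rmult_assoc, <- Hk in Hs1, Hs2. rewrite P_16 in Hs2.
    unfold zsum.
    set (B := 256 * (sqrt (Rabs (x - x')) * sqrt (Rabs y))).
    assert (0 <= B) by (unfold B; apply Rmult_le_pos; [lra| apply Rmult_le_pos; apply sqrt_pos]).
    apply Rle_trans with (B + 2 * B); [| unfold B; lra].
    apply (GL _ _ (js + Z.of_nat N)%Z B B); auto.
    + intros i Hi _. replace (Z.of_nat i - (js + Z.of_nat N))%Z with ((Z.of_nat i - Z.of_nat N) - js)%Z by lia.
      apply dphi_point; lra.
    + intros i Hi _. eapply Rle_trans. apply dphi_point with (js := js); lra.
      pose proof (half_pow_le1 (Z.abs_nat ((Z.of_nat i - Z.of_nat N) - js))). unfold B in *. 
      assert (0 <= sqrt (Rabs (x - x')) * sqrt (Rabs y)) by (apply Rmult_le_pos; apply sqrt_pos). nra.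
Qed.
End Phi2.

Lemma sum_E2 N r y y' : Rabs y' <= Rabs y ->
  zsum N (fun j => Rabs (amp (kk r j) y - amp (kk r j) y')) <= 3 * Rabs (y - y').
Proof.
  intros Hy. destruct (Req_dec (Rabs y) 0) as [H0|H0].
  - assert (Rabs y' = 0) by (pose proof (Rabs_pos y'); lra).
    unfold zsum. eapply Rle_trans.
    apply (nsum_le _ _ (fun _ => 0)). intros. unfold amp. rewrite H0, H. rewrite Rminus_diag, Rabs_R0. right; ring.
    assert (nsum (2 * N) (fun _ => 0) = 0). { induction (2 * N)%nat; simpl; [ring|]. rewrite IHn. ring. }
    rewrite H1. pose proof (Rabs_pos (y - y')). lra.
  - assert (Hh : 0 < Rabs y) by (pose proof (Rabs_pos y); lra).
    destruct (P_scale (P (2 * INR r) * Rabs y) 16) as [js [Hs1 Hs2]].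
    { pose proof (P_pos (2 * INR r)). nra. } lra.
    assert (Hk : P (2 * kk r js) = P (IZR js * 16) * P (2 * INR r)) by (rewrite <- P_add; f_equal; unfold kk; ring).
    rewrite <- Rmult_assoc, <- Hk in Hs1, Hs2.
    unfold zsum.
    set (B := Rabs (y - y')).
    assert (0 <= B) by apply Rabs_pos.
    apply Rle_trans with (B + 2 * B); [| unfold B; lra].
    apply (GL _ _ (js + Z.of_nat N)%Z B B); auto.
    + intros i Hi _. replace (Z.of_nat i - (js + Z.of_nat N))%Z with ((Z.of_nat i - Z.of_nat N) - js)%Z by lia.
      apply damp_point; auto.
    + intros i Hi _. eapply Rle_trans. apply damp_point with (js := js); auto.
      pose proof (half_pow_le1 (Z.abs_nat ((Z.of_nat i - Z.of_nat N) - js))). unfold B in *. nra.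
Qed.

Definition G N phi r x y := zsum N (term phi r x y).

Section Phi3.
Variable phi : R -> R.
Hypothesis Hlip : forall a b, Rabs (phi a - phi b) <= Rabs (a - b).
Hypothesis Hb : forall a, Rabs (phi a) <= 1.

Lemma term_split r x x' y y' j :
  term phi r x y j - term phi r x' y' j =
  amp (kk r j) y * (phi (P (2 * kk r j) * x) - phi (P (2 * kk r j) * x'))
  + (amp (kk r j) y - amp (kk r j) y') * phi (P (2 * kk r j) * x').
Proof. unfold term. ring. Qed.

Lemma Gdiff N r x x' y y' : G N phi r x y - G N phi r x' y' =
  nsum (2 * N) (fun i => amp (kk r (Z.of_nat i - Z.of_nat N)) y *
     (phi (P (2 * kk r (Z.of_nat i - Z.of_nat N)) * x) - phi (P (2 * kk r (Z.of_nat i - Z.of_nat N)) * x')))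
  + nsum (2 * N) (fun i => (amp (kk r (Z.of_nat i - Z.of_nat N)) y - amp (kk r (Z.of_nat i - Z.of_nat N)) y')
       * phi (P (2 * kk r (Z.of_nat i - Z.of_nat N)) * x')).
Proof.
  unfold G, zsum. rewrite <- nsum_minus, <- nsum_plus. apply nsum_ext. intros. apply term_split.
Qed.

Lemma abs_mul_le1 a b : Rabs b <= 1 -> Rabs (a * b) <= Rabs a.
Proof. intros. rewrite Rabs_mult. pose proof (Rabs_pos a). pose proof (Rabs_pos b). nra. Qed.

Lemma sumC_bound N r y y' x' : Rabs y' <= Rabs y ->
  Rabs (nsum (2 * N) (fun i => (amp (kk r (Z.of_nat i - Z.of_nat N)) y - amp (kk r (Z.of_nat i - Z.of_nat N)) y')
       * phi (P (2 * kk r (Z.of_nat i - Z.of_nat N)) * x'))) <= 3 * Rabs (y - y').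
Proof.
  intros Hy. eapply Rle_trans. apply nsum_abs. eapply Rle_trans; [|apply (sum_E2 N r y y' Hy)].
  unfold zsum. apply nsum_le. intros. apply abs_mul_le1. auto.
Qed.

Lemma coord_upper N r x x' y y' : Rabs y' <= Rabs y ->
  Rabs (G N phi r x y - G N phi r x' y') <= 768 * (sqrt (Rabs (x - x')) * sqrt (Rabs y)) + 3 * Rabs (y - y').
Proof.
  intros Hy. rewrite Gdiff.
  eapply Rle_trans. apply Rabs_triang. apply Rplus_le_compat; [|apply sumC_bound; auto].
  eapply Rle_trans. apply nsum_abs. eapply Rle_trans; [|apply (sum_E1 phi Hlip Hb N r x x' y)].
  unfold zsum, dterm. apply nsum_le. intros. rewrite Rabs_mult. rewrite (Rabs_right (amp _ _)). lra.
  apply Rle_ge, amp_nonneg.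
Qed.

Lemma block_lower N r j0 x x' y y' : Rabs y' <= Rabs y ->
  (0 <= j0 + Z.of_nat N)%Z -> (j0 + Z.of_nat N < Z.of_nat (2 * N))%Z ->
  1 <= P (2 * kk r j0) * Rabs (x - x') -> P (2 * kk r j0) * Rabs (x - x') <= 4 ->
  Rabs ((G N phi r x y - G N phi r x' y') -
        amp (kk r j0) y * (phi (P (2 * kk r j0) * x) - phi (P (2 * kk r j0) * x')))
  <= sqrt (Rabs y) * P (- kk r j0) / 16 + 3 * Rabs (y - y').
Proof.
  intros Hy Hj1 Hj2 H1 H2. rewrite Gdiff.
  set (i0 := Z.to_nat (j0 + Z.of_nat N)).
  assert (Hi0 : (i0 < 2 * N)%nat) by (unfold i0; lia).
  rewrite (nsum_split _ _ i0 Hi0).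
  replace (Z.of_nat i0 - Z.of_nat N)%Z with j0 by (unfold i0; lia).
  match goal with |- Rabs (?a + ?b + ?c - ?a) <= _ => replace (a + b + c - a) with (b + c) by ring end.
  eapply Rle_trans. apply Rabs_triang. apply Rplus_le_compat; [|apply sumC_bound; auto].
  eapply Rle_trans. apply nsum_abs.
  set (A := sqrt (Rabs y) * P (- kk r j0)).
  assert (HA : 0 <= A) by (unfold A; apply Rmult_le_pos; [apply sqrt_pos | left; apply P_pos]).
  replace (A / 16) with (0 + 2 * (A / 32)) by field.
  apply (GL _ _ (Z.of_nat i0) (A / 32) 0); [lra | lra | |].
  - intros i Hi Hne. destruct (Nat.eqb_spec i i0); [subst; lia|].
    rewrite Rabs_mult. rewrite (Rabs_right (amp _ _)) by (apply Rle_ge, amp_nonneg).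
    replace (Z.of_nat i - Z.of_nat i0)%Z with ((Z.of_nat i - Z.of_nat N) - j0)%Z by (unfold i0; lia).
    apply (tail_point phi Hlip Hb); auto. lia.
  - intros i Hi Heq. destruct (Nat.eqb_spec i i0); [|lia]. rewrite Rabs_R0. lra.
Qed.
End Phi3.

Lemma cos_b a : Rabs (cos a) <= 1.
Proof. pose proof (COS_bound a). unfold Rabs; destruct Rcase_abs; lra. Qed.
Lemma sin_b a : Rabs (sin a) <= 1.
Proof. pose proof (SIN_bound a). unfold Rabs; destruct Rcase_abs; lra. Qed.

Definition FN (N : nat) (p : H3) (i : nat) : R :=
  let '(x, y, z) := p in
  match i with
  | O => x
  | S O => y
  | S (S i') => if Nat.ltb i' 16 then
                  (if Nat.even i' then G N cos (Nat.div2 i') x y else G N sin (Nat.div2 i') x y)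
                else 0
  end.

Lemma sqsum_nonneg n u : 0 <= sqsum n u.
Proof. induction n; simpl; [lra|]. pose proof (pow2_ge_0 (u n)). lra. Qed.

Lemma sqrt_sqsum_le n u : sqrt (sqsum n u) <= nsum n (fun i => Rabs (u i)).
Proof.
  induction n; simpl. rewrite sqrt_0; lra.
  pose proof (sqsum_nonneg n u). pose proof (sqrt_pos (sqsum n u)). pose proof (sqrt_sqrt _ H).
  pose proof (Rabs_pos (u n)).
  apply Rle_trans with (sqrt (sqsum n u) + Rabs (u n)); [|lra].
  apply sq_le. lra. rewrite sqrt_sqrt by (pose proof (pow2_ge_0 (u n)); lra).
  pose proof (Rsqr_abs (u n)). unfold Rsqr in *. nra.
Qed.

Lemma sqsum_ge1 n u i : (i < n)%nat -> u i ^ 2 <= sqsum n u.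
Proof.
  induction n; intros H; [lia|]. simpl. destruct (Nat.eq_dec i n).
  - subst. pose proof (sqsum_nonneg n u). lra.
  - pose proof (IHn ltac:(lia)). pose proof (pow2_ge_0 (u n)). lra.
Qed.

Lemma sqsum_ge2 n u i j : (i < j)%nat -> (j < n)%nat -> u i ^ 2 + u j ^ 2 <= sqsum n u.
Proof.
  induction n; intros H H'; [lia|]. simpl. destruct (Nat.eq_dec j n).
  - subst. pose proof (sqsum_ge1 n u i H). lra.
  - pose proof (IHn H ltac:(lia)). pose proof (pow2_ge_0 (u n)). lra.
Qed.

Lemma dist_ge1 n u v i : (i < n)%nat -> Rabs (u i - v i) <= euclid_dist n u v.
Proof.
  intros H. unfold euclid_dist. pose proof (sqsum_ge1 n (fun i => u i - v i) i H). simpl in H0.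
  rewrite <- sqrt_Rsqr_abs. apply sqrt_le_1_alt. unfold Rsqr. lra.
Qed.

Lemma dist_ge2 n u v i j : (i < j)%nat -> (j < n)%nat ->
  sqrt ((u i - v i) ^ 2 + (u j - v j) ^ 2) <= euclid_dist n u v.
Proof.
  intros H H'. unfold euclid_dist. apply sqrt_le_1_alt. apply (sqsum_ge2 n (fun i => u i - v i)); auto.
Qed.

Lemma norm2_triang a1 a2 b1 b2 :
  sqrt ((a1 + b1) ^ 2 + (a2 + b2) ^ 2) <= sqrt (a1 ^ 2 + a2 ^ 2) + sqrt (b1 ^ 2 + b2 ^ 2).
Proof.
  assert (HA : 0 <= a1 ^ 2 + a2 ^ 2) by nra. assert (HB : 0 <= b1 ^ 2 + b2 ^ 2) by nra.
  pose proof (sqrt_sqrt _ HA). pose proof (sqrt_sqrt _ HB). pose proof (sqrt_pos (a1 ^ 2 + a2 ^ 2)).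
  pose proof (sqrt_pos (b1 ^ 2 + b2 ^ 2)).
  set (na := sqrt (a1 ^ 2 + a2 ^ 2)) in *. set (nb := sqrt (b1 ^ 2 + b2 ^ 2)) in *.
  assert (Hd : a1 * b1 + a2 * b2 <= na * nb).
  { apply sq_le. nra.
    replace (na * nb * (na * nb)) with ((na * na) * (nb * nb)) by ring. rewrite H, H0. pose proof (pow2_ge_0 (a1 * b2 - a2 * b1)). nra. }
  apply sq_le. lra. rewrite sqrt_sqrt by (pose proof (pow2_ge_0 (a1+b1)); pose proof (pow2_ge_0 (a2+b2)); lra).
  replace ((na + nb) * (na + nb)) with (na * na + nb * nb + 2 * (na * nb)) by ring. rewrite H, H0. nra.
Qed.

Lemma trig_chord a b : (cos a - cos b) ^ 2 + (sin a - sin b) ^ 2 = 2 - 2 * cos (a - b).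
Proof. rewrite cos_minus. pose proof (sin2_cos2 a). pose proof (sin2_cos2 b). unfold Rsqr in *. nra. Qed.

Lemma FN_cos N x y z r : (r < 8)%nat -> FN N (x, y, z) (S (S (2 * r))) = G N cos r x y.
Proof.
  intros Hr. unfold FN. destruct (Nat.ltb_spec (2 * r) 16); [|lia].
  rewrite Nat.even_mul, Nat.div2_double. reflexivity.
Qed.

Lemma FN_sin N x y z r : (r < 8)%nat -> FN N (x, y, z) (S (S (S (2 * r)))) = G N sin r x y.
Proof.
  intros Hr. unfold FN. destruct (Nat.ltb_spec (S (2 * r)) 16); [|lia].
  rewrite Nat.even_succ, Nat.odd_mul, Nat.div2_succ_double. reflexivity.
Qed.

Lemma dH_plane x y x' y' :
  dH (x, y, / 2 * (x * y)) (x', y', / 2 * (x' * y')) =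
  Rabs (x - x') + Rabs (y - y') + sqrt (Rabs (x - x') * (Rabs (y + y') / 2)).
Proof.
  unfold dH. f_equal. f_equal.
  replace (/ 2 * (x * y) - / 2 * (x' * y') + / 2 * (x * y' - x' * y)) with ((x - x') * ((y + y') / 2)) by field.
  rewrite Rabs_mult. f_equal. unfold Rdiv. rewrite Rabs_mult. rewrite (Rabs_right (/2)) by lra. reflexivity.
Qed.

Section Pair.
Variables x y x' y' : R.
Hypothesis Hy : Rabs y' <= Rabs y.

Let h := Rabs (x - x').
Let dy := Rabs (y - y').
Let S := sqrt h * sqrt (Rabs y).
Let V := sqrt (h * (Rabs (y + y') / 2)).

Lemma h_nonneg : 0 <= h. Proof. apply Rabs_pos. Qed.
Lemma dy_nonneg : 0 <= dy. Proof. apply Rabs_pos. Qed.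
Lemma S_nonneg : 0 <= S. Proof. apply Rmult_le_pos; apply sqrt_pos. Qed.

Lemma V_le_S : V <= S.
Proof.
  unfold V, S. rewrite <- sqrt_mult by (apply Rabs_pos). apply sqrt_le_1_alt.
  apply Rmult_le_compat_l. apply Rabs_pos. pose proof (Rabs_triang y y'). lra.
Qed.

Lemma S_le_V : S <= V + (h + dy) / 2.
Proof.
  pose proof h_nonneg. pose proof dy_nonneg.
  assert (HV : 0 <= h * (Rabs (y + y') / 2)) by (apply Rmult_le_pos; [lra| pose proof (Rabs_pos (y+y')); lra]).
  pose proof (sqrt_sqrt _ HV). pose proof (sqrt_pos (h * (Rabs (y + y') / 2))).
  fold V in H1, H2.
  apply sq_le. lra.
  unfold S. replace (sqrt h * sqrt (Rabs y) * (sqrt h * sqrt (Rabs y))) with ((sqrt h * sqrt h) * (sqrt (Rabs y) * sqrt (Rabs y))) by ring.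
  rewrite sqrt_sqrt by lra. rewrite sqrt_sqrt by apply Rabs_pos.
  assert (Rabs y <= Rabs (y + y') / 2 + dy / 2).
  { unfold dy. replace (2 * y) with ((y + y') + (y - y')) by ring.
    pose proof (Rabs_triang (y + y') (y - y')). replace ((y + y') + (y - y')) with (2 * y) in H3 by ring.
    rewrite Rabs_mult, (Rabs_right 2) in H3 by lra. lra. }
  assert (h * Rabs y <= h * (Rabs (y + y') / 2) + h * dy / 2) by nra.
  nra.
Qed.
End Pair.

Lemma finite_upper N x y x' y' : Rabs y' <= Rabs y ->
  euclid_dist 19 (FN N (x, y, / 2 * (x * y))) (FN N (x', y', / 2 * (x' * y')))
  <= 14592 * dH (x, y, / 2 * (x * y)) (x', y', / 2 * (x' * y')).
Proof.
  intros Hy. rewrite dH_plane.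
  pose proof (h_nonneg x x'). pose proof (dy_nonneg y y'). pose proof (S_nonneg x y x').
  pose proof (S_le_V x y x' y').
  set (T := Rabs (x - x') + 4 * Rabs (y - y') + 768 * (sqrt (Rabs (x - x')) * sqrt (Rabs y))) in *.
  unfold euclid_dist. eapply Rle_trans. apply sqrt_sqsum_le.
  eapply Rle_trans. apply (nsum_const_bound _ _ T).
  - intros i Hi. cbv beta. destruct i as [|[|i']]; simpl FN.
    + unfold T. lra.
    + unfold T. lra.
    + destruct (Nat.ltb i' 16); [|rewrite Rminus_0_r, Rabs_R0; unfold T; lra].
      destruct (Nat.even i').
      * eapply Rle_trans. apply coord_upper; auto. apply cos_lip. apply cos_b. unfold T. lra.
      * eapply Rle_trans. apply coord_upper; auto. apply sin_lip. apply sin_b. unfold T. lra.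
  - replace (INR 19) with 19 by (simpl; ring). unfold T. lra.
Qed.

Lemma kk_int (n : Z) : kk (Z.to_nat (n mod 8)) (n / 8) = IZR n.
Proof.
  unfold kk. rewrite INR_IZR_INZ. rewrite Z2Nat.id by (apply Z.mod_pos_bound; lia).
  rewrite <- mult_IZR, <- plus_IZR. f_equal. pose proof (Z_div_mod_eq_full n 8). lia.
Qed.

Lemma finite_lower x y x' y' : Rabs y' <= Rabs y ->
  exists N0, forall N, (N0 <= N)%nat ->
  dH (x, y, / 2 * (x * y)) (x', y', / 2 * (x' * y'))
  <= 200 * euclid_dist 19 (FN N (x, y, / 2 * (x * y))) (FN N (x', y', / 2 * (x' * y'))).
Proof.
  intros Hy. rewrite dH_plane.
  pose proof (h_nonneg x x'). pose proof (dy_nonneg y y'). pose proof (S_nonneg x y x').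
  pose proof (V_le_S x y x' y' Hy).
  set (h := Rabs (x - x')) in *. set (dy := Rabs (y - y')) in *.
  set (SS := sqrt h * sqrt (Rabs y)) in *.
  destruct (Rle_lt_dec (SS / 64) (h + dy)) as [Hc|Hc].
  - exists O. intros N _.
    pose proof (dist_ge1 19 (FN N (x, y, / 2 * (x * y))) (FN N (x', y', / 2 * (x' * y'))) 0 ltac:(lia)).
    pose proof (dist_ge1 19 (FN N (x, y, / 2 * (x * y))) (FN N (x', y', / 2 * (x' * y'))) 1 ltac:(lia)).
    simpl FN in H3, H4. fold h in H3. fold dy in H4. lra.
  - assert (Hh : 0 < h).
    { destruct H; auto. exfalso. unfold SS in Hc. rewrite <- H in Hc. rewrite sqrt_0 in Hc. lra. }
    destruct (P_scale h 2 Hh ltac:(lra)) as [n [Hn1 Hn2]].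
    rewrite P_2 in Hn2.
    set (r := Z.to_nat (n mod 8)). set (j0 := (n / 8)%Z).
    assert (Hr : (r < 8)%nat) by (unfold r; pose proof (Z.mod_pos_bound n 8); lia).
    assert (Hk : kk r j0 = IZR n) by apply kk_int.
    replace (IZR n * 2) with (2 * kk r j0) in Hn1, Hn2 by (rewrite Hk; ring).
    exists (S (Z.to_nat (Z.abs j0))). intros N HN.
    set (p := (x, y, / 2 * (x * y))). set (q := (x', y', / 2 * (x' * y'))).
    pose proof (dist_ge2 19 (FN N p) (FN N q) (S (S (2 * r))) (S (S (S (2 * r)))) ltac:(lia) ltac:(lia)) as Hd.
    unfold p, q in Hd. rewrite !FN_cos, !FN_sin in Hd by auto.
    set (k0 := kk r j0) in *.
    set (A := sqrt (Rabs y) * P (- k0)).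
    set (a0 := amp k0 y).
    set (Dc := G N cos r x y - G N cos r x' y') in *.
    set (Ds := G N sin r x y - G N sin r x' y') in *.
    set (Mc := a0 * (cos (P (2 * k0) * x) - cos (P (2 * k0) * x'))).
    set (Ms := a0 * (sin (P (2 * k0) * x) - sin (P (2 * k0) * x'))).
    assert (Hj1 : (0 <= j0 + Z.of_nat N)%Z) by lia.
    assert (Hj2 : (j0 + Z.of_nat N < Z.of_nat (2 * N))%Z) by lia.
    pose proof (block_lower cos cos_lip cos_b N r j0 x x' y y' Hy Hj1 Hj2 Hn1 ltac:(left; exact Hn2)) as Bc.
    pose proof (block_lower sin sin_lip sin_b N r j0 x x' y y' Hy Hj1 Hj2 Hn1 ltac:(left; exact Hn2)) as Bs.
    fold k0 A a0 Dc Ds Mc Ms h dy in Bc, Bs.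
    assert (HA : 0 <= A) by (unfold A; apply Rmult_le_pos; [apply sqrt_pos| left; apply P_pos]).
    assert (Hsh : sqrt h <= 2 * P (- k0)).
    { assert (P k0 * sqrt h <= 2).
      { apply sq_le. lra. replace (P k0 * sqrt h * (P k0 * sqrt h)) with ((P k0 * P k0) * (sqrt h * sqrt h)) by ring.
        rewrite sqrt_sqrt by lra. rewrite <- P_sq. lra. }
      pose proof (P_opp k0). pose proof (P_pos (- k0)). pose proof (P_pos k0). pose proof (sqrt_pos h). nra. }
    assert (HSA : SS <= 2 * A).
    { unfold SS, A. pose proof (sqrt_pos (Rabs y)). nra. }
    assert (HP2 : P (- (2 * k0)) <= h).
    { pose proof (P_opp (2 * k0)). pose proof (P_pos (- (2 * k0))). nra. }
    assert (Ha0 : A - h <= a0).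
    { pose proof (amp_ge k0 y). fold a0 in H3. unfold A. lra. }
    assert (Ha0' : 31 / 32 * A <= a0) by lra.
    assert (HM : 4 / 5 * (a0 * a0) <= Mc ^ 2 + Ms ^ 2).
    { unfold Mc, Ms. replace ((a0 * (cos (P (2 * k0) * x) - cos (P (2 * k0) * x'))) ^ 2 +
         (a0 * (sin (P (2 * k0) * x) - sin (P (2 * k0) * x'))) ^ 2) with
        (a0 * a0 * ((cos (P (2 * k0) * x) - cos (P (2 * k0) * x')) ^ 2 + (sin (P (2 * k0) * x) - sin (P (2 * k0) * x')) ^ 2)) by ring.
      rewrite trig_chord.
      assert (cos (P (2 * k0) * x - P (2 * k0) * x') <= 3 / 5).
      { apply cos_le_35. replace (P (2 * k0) * x - P (2 * k0) * x') with (P (2 * k0) * (x - x')) by ring.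
        rewrite Rabs_mult, Rabs_right by (left; apply P_pos). fold h. lra. }
      pose proof (Rle_0_sqr a0). unfold Rsqr in H4. nra. }
    assert (HMn : 85 / 100 * A <= sqrt (Mc ^ 2 + Ms ^ 2)).
    { apply sq_le. apply sqrt_pos. rewrite sqrt_sqrt by nra. nra. }
    assert (HEn : sqrt ((Dc - Mc) ^ 2 + (Ds - Ms) ^ 2) <= A / 4).
    { apply sq_le. lra. rewrite sqrt_sqrt by (pose proof (pow2_ge_0 (Dc - Mc)); pose proof (pow2_ge_0 (Ds - Ms)); lra).
      assert (Rabs (Dc - Mc) <= 5 / 32 * A) by lra. assert (Rabs (Ds - Ms) <= 5 / 32 * A) by lra.
      pose proof (Rsqr_abs (Dc - Mc)). pose proof (Rsqr_abs (Ds - Ms)). unfold Rsqr in *.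
      pose proof (Rabs_pos (Dc - Mc)). pose proof (Rabs_pos (Ds - Ms)). nra. }
    pose proof (norm2_triang Dc Ds (- (Dc - Mc)) (- (Ds - Ms))) as Ht.
    replace (Dc + - (Dc - Mc)) with Mc in Ht by ring. replace (Ds + - (Ds - Ms)) with Ms in Ht by ring.
    replace ((- (Dc - Mc)) ^ 2 + (- (Ds - Ms)) ^ 2) with ((Dc - Mc) ^ 2 + (Ds - Ms) ^ 2) in Ht by ring.
    unfold p, q in *. lra.
Qed.

Lemma INR_le_pow2 n : INR n <= 2 ^ n.
Proof.
  induction n. simpl; lra. rewrite S_INR. simpl.
  assert (1 <= 2 ^ n) by (apply pow_R1_Rle; lra). lra.
Qed.

Lemma zsum_nsum N u : zsum N u = nsum N (fun n => u (- Z.of_nat (S n))%Z + u (Z.of_nat n)).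
Proof.
  induction N. reflexivity.
  rewrite zsum_S, IHN. cbn [nsum]. ring.
Qed.

Lemma nsum_sum_n v N : sum_n v N = nsum (S N) v.
Proof.
  rewrite sum_n_Reals. induction N. simpl. symmetry. apply Rplus_0_l.
  simpl sum_f_R0. rewrite IHN. reflexivity.
Qed.

Lemma zsum_conv phi r x y : (forall a, Rabs (phi a) <= 1) -> (r < 8)%nat ->
  ex_finite_lim_seq (fun N => zsum N (term phi r x y)).
Proof.
  intros Hb Hr.
  set (u := term phi r x y).
  set (v := fun n : nat => u (- Z.of_nat (S n))%Z + u (Z.of_nat n)).
  assert (Hu : forall n : nat, Rabs (u (Z.of_nat n)) <= sqrt (Rabs y) * (1/2) ^ n).
  { intros n. unfold u, term. rewrite Rabs_mult. pose proof (Hb (P (2 * kk r (Z.of_nat n)) * x)).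
    pose proof (amp_le (kk r (Z.of_nat n)) y). pose proof (amp_nonneg (kk r (Z.of_nat n)) y).
    rewrite (Rabs_right (amp _ _)) by lra.
    assert (P (- kk r (Z.of_nat n)) <= (1/2) ^ n).
    { rewrite <- P_nat. apply P_le. unfold kk. rewrite <- INR_IZR_INZ. pose proof (pos_INR n). pose proof (pos_INR r). lra. }
    pose proof (sqrt_pos (Rabs y)). pose proof (Rabs_pos (phi (P (2 * kk r (Z.of_nat n)) * x))).
    pose proof (P_pos (- kk r (Z.of_nat n))).
    apply Rle_trans with (sqrt (Rabs y) * P (- kk r (Z.of_nat n)) * 1).
    { apply Rmult_le_compat; [lra | lra | lra | exact H]. }
    rewrite Rmult_1_r. apply Rmult_le_compat_l; auto. }
  destruct (archimed (Rabs y)) as [Hup _].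
  set (n1 := Z.to_nat (up (Rabs y))).
  assert (Hn1 : Rabs y <= INR n1).
  { unfold n1. pose proof (Rabs_pos y). assert (0 <= up (Rabs y))%Z.
    { apply le_IZR. lra. }
    rewrite INR_IZR_INZ, Z2Nat.id by auto. lra. }
  assert (Hz : forall n, (n1 <= n)%nat -> u (- Z.of_nat (S n))%Z = 0).
  { intros n Hn. unfold u, term. rewrite amp_zero. ring.
    assert (P (2 * kk r (- Z.of_nat (S n))) <= (1/2) ^ n).
    { rewrite <- P_nat. apply P_le. unfold kk. rewrite opp_IZR, <- INR_IZR_INZ, S_INR.
      pose proof (pos_INR n). assert (INR r <= 7) by (replace 7 with (INR 7) by (simpl; ring); apply le_INR; lia). lra. }
    assert (Rabs y <= 2 ^ n).
    { eapply Rle_trans. apply Hn1. eapply Rle_trans. apply le_INR. apply Hn. apply INR_le_pow2. }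
    assert ((1/2) ^ n * 2 ^ n = 1). { rewrite <- Rpow_mult_distr. replace (1/2*2) with 1 by field. apply pow1. }
    pose proof (half_pow_pos n). pose proof (Rabs_pos y). nra. }
  assert (Hv : ex_series v).
  { apply (ex_series_incr_n v n1).
    apply (@ex_series_le R_AbsRing R_CompleteNormedModule _ (fun k => sqrt (Rabs y) * (1/2) ^ k)).
    - intros k. unfold v. rewrite Hz by lia. rewrite Rplus_0_l.
      change (norm (u (Z.of_nat (n1 + k)))) with (Rabs (u (Z.of_nat (n1 + k)))).
      eapply Rle_trans. apply Hu. apply Rmult_le_compat_l. apply sqrt_pos.
      rewrite pow_add. pose proof (half_pow_le1 n1). pose proof (half_pow_pos k). nra.
    - apply (ex_series_ext (fun k => scal (sqrt (Rabs y)) ((1/2) ^ k))). reflexivity.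
      apply (@ex_series_scal R_AbsRing R_NormedModule). apply ex_series_geom. rewrite Rabs_right; lra. }
  exists (Series v).
  apply is_lim_seq_incr_1.
  apply (is_lim_seq_ext (sum_n v)).
  - intros N. rewrite nsum_sum_n, zsum_nsum. reflexivity.
  - apply Series_correct. exact Hv.
Qed.

Definition Fm (p : H3) (i : nat) : R := Lim_seq (fun N => FN N p i).

Lemma FN_conv p i : is_lim_seq (fun N => FN N p i) (Fm p i).
Proof.
  unfold Fm. apply Lim_seq_correct'. destruct p as [[x y] z].
  destruct i as [|[|i']]; simpl FN.
  - exists x. apply is_lim_seq_const.
  - exists y. apply is_lim_seq_const.
  - destruct (Nat.ltb_spec i' 16); [|exists 0; apply is_lim_seq_const].
    assert (Nat.div2 i' < 8)%nat.
    { pose proof (Nat.div2_odd i'). destruct (Nat.odd i'); simpl in *; lia. }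
    destruct (Nat.even i'); unfold G; apply zsum_conv; auto. apply cos_b. apply sin_b.
Qed.

Lemma sqsum_conv n (a b : nat -> nat -> R) (A B : nat -> R) :
  (forall i, is_lim_seq (fun N => a N i) (A i)) -> (forall i, is_lim_seq (fun N => b N i) (B i)) ->
  is_lim_seq (fun N => sqsum n (fun i => a N i - b N i)) (sqsum n (fun i => A i - B i)).
Proof.
  intros Ha Hb. induction n; simpl.
  - apply is_lim_seq_const.
  - apply is_lim_seq_plus'; auto.
    apply (is_lim_seq_ext (fun N => (a N n - b N n) * ((a N n - b N n) * 1))).
    intros; simpl; ring. 
    replace ((A n - B n) ^ 2) with ((A n - B n) * ((A n - B n) * 1)) by ring.
    apply is_lim_seq_mult'. apply is_lim_seq_minus'; auto.
    apply is_lim_seq_mult'. apply is_lim_seq_minus'; auto. apply is_lim_seq_const.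
Qed.

Lemma dist_conv p q : is_lim_seq (fun N => euclid_dist 19 (FN N p) (FN N q)) (euclid_dist 19 (Fm p) (Fm q)).
Proof.
  unfold euclid_dist. apply is_lim_seq_continuous.
  apply continuity_pt_sqrt. apply sqsum_nonneg.
  apply (sqsum_conv 19 (fun N => FN N p) (fun N => FN N q)); intros; apply FN_conv.
Qed.

Lemma dH_nonneg x y x' y' : 0 <= dH (x, y, / 2 * (x * y)) (x', y', / 2 * (x' * y')).
Proof. rewrite dH_plane. pose proof (Rabs_pos (x - x')). pose proof (Rabs_pos (y - y')).
  pose proof (sqrt_pos (Rabs (x - x') * (Rabs (y + y') / 2))). lra. Qed.

Lemma key x y x' y' : Rabs y' <= Rabs y ->
  let a := (x, y, / 2 * (x * y)) in let b := (x', y', / 2 * (x' * y')) in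
  / 20000 * dH a b <= euclid_dist 19 (Fm a) (Fm b) /\ euclid_dist 19 (Fm a) (Fm b) <= 20000 * dH a b.
Proof.
  intros Hy a b. pose proof (dH_nonneg x y x' y').
  pose proof (dist_conv a b) as Hl. split.
  - destruct (finite_lower x y x' y' Hy) as [N0 HN0].
    apply (is_lim_seq_incr_n _ N0) in Hl.
    assert (Hle := is_lim_seq_le (fun _ => dH a b / 200) (fun n => euclid_dist 19 (FN (n + N0) a) (FN (n + N0) b))
       (dH a b / 200) (euclid_dist 19 (Fm a) (Fm b))).
    assert (dH a b / 200 <= euclid_dist 19 (Fm a) (Fm b)).
    { apply Hle. intros n. pose proof (HN0 (n + N0)%nat ltac:(lia)). unfold a, b. lra.
      apply is_lim_seq_const. exact Hl. }
    unfold a, b in *. lra.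
  - assert (Hle := is_lim_seq_le (fun n => euclid_dist 19 (FN n a) (FN n b)) (fun _ => 14592 * dH a b)
       (euclid_dist 19 (Fm a) (Fm b)) (14592 * dH a b)).
    assert (euclid_dist 19 (Fm a) (Fm b) <= 14592 * dH a b).
    { apply Hle. intros n. apply finite_upper; auto. exact Hl. apply is_lim_seq_const. }
    unfold a, b in *. lra.
Qed.

Lemma sqsum_sym n u v : sqsum n (fun i => u i - v i) = sqsum n (fun i => v i - u i).
Proof. induction n; simpl; auto. rewrite IHn. ring. Qed.

Lemma dH_sym x y x' y' : dH (x, y, / 2 * (x * y)) (x', y', / 2 * (x' * y')) = dH (x', y', / 2 * (x' * y')) (x, y, / 2 * (x * y)).
Proof. rewrite !dH_plane. rewrite (Rabs_minus_sym x), (Rabs_minus_sym y), (Rplus_comm y). reflexivity. Qed.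

Theorem proposition5p6 : biLipschitz_embeds planeP 19.
Proof.
  exists 20000, Fm. split; [lra|].
  intros [[x y] z] [[x' y'] z'] Ha Hb. simpl in Ha, Hb. subst z z'.
  destruct (Rle_dec (Rabs y') (Rabs y)) as [H|H].
  - apply key; auto.
  - destruct (key x' y' x y ltac:(lra)) as [H1 H2].
    unfold euclid_dist in *. rewrite sqsum_sym. rewrite dH_sym. auto.
Qed.
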